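(* Let $(S,\gamma)$ be a $C^\infty$ surface with boundary in $\mathbf{R}^3$. Suppose the dual-boundary $\widehat\gamma(t)$ is of type $(1,2,2+r)$ at $t=t_1$ for some positive integer $r$. Then the distance $d=\mathrm{dist}(\gamma(t_1),\widehat\gamma^*(t_1))$ is given by $$d=\left|\frac{\kappa_2\sqrt{\kappa_2^2+\kappa_3^2}}{\kappa_2(\kappa_3'+\kappa_1\kappa_2)+\kappa_3(-\kappa_2'+\kappa_1\kappa_3)}\right|$$ at $t=t_1$.
   Context: $S\subset\mathbf{R}^3$ is a co-oriented immersed $C^\infty$ surface with boundary curve $\gamma(t)$ parametrised by arc length; primes denote $d/dt$. Adapted frame: $\boldsymbol e_1=\gamma'$, $\boldsymbol e_3=\boldsymbol n$ the unit normal, $\boldsymbol e_2=\boldsymbol e_3\times\boldsymbol e_1$; $\kappa_1,\kappa_2,\kappa_3$ are defined by $\boldsymbol e_1'=\kappa_1\boldsymbol e_2+\kappa_2\boldsymbol e_3$, $\boldsymbol e_2'=-\kappa_1\boldsymbol e_1+\kappa_3\boldsymbol e_3$, $\boldsymbol e_3'=-\kappa_2\boldsymbol e_1-\kappa_3\boldsymbol e_2$. The dual-boundary is $\widehat\gamma(t)=[-\gamma(t)\cdot\boldsymbol n(t):\boldsymbol n(t)]\in\mathbf{R}P^{3*}$, the tangent plane $T_{\gamma(t)}S$ viewed in the dual projective space. Its type at $t_1$ is $(a_1,a_2,a_3)$ with $a_i=\min\{m:\mathrm{rank}(\widehat\gamma'(t_1),\dots,\widehat\gamma^{(m)}(t_1))=i\}$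 in affine coordinates. $\widehat\gamma^*(t_1)\in\mathbf{R}P^3$ is the osculating plane of $\widehat\gamma$ at $t_1$ viewed as a point of $\mathbf{R}P^3$; when it lies in $\mathbf{R}^3$ it is the point $x$ solving $x\cdot\boldsymbol n=\gamma\cdot\boldsymbol n$, $x\cdot\boldsymbol n'=(\gamma\cdot\boldsymbol n)'$, $x\cdot\boldsymbol n''=(\gamma\cdot\boldsymbol n)''$ at $t_1$. (If the denominator vanishes, $\widehat\gamma^*(t_1)$ is at infinity.) *)

(* Defs.v *)
From HB Require Import structures.
From mathcomp Require Import all_boot all_order all_algebra.
From mathcomp Require Import all_classical all_reals all_analysis.
Set Implicit Arguments. Unset Strict Implicit. Unset Printing Implicit Defensive.
Import Order.TTheory GRing.Theory Num.Theory.
Local Open Scope ring_scope.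

Section Defs.
Variable R : realType.

Definition dot3 (u v : 'rV[R]_3) : R := \sum_(i < 3) u ord0 i * v ord0 i.

Definition cross3 (u v : 'rV[R]_3) : 'rV[R]_3 :=
  \row_(i < 3)
    (u ord0 (inord ((i + 1) %% 3)) * v ord0 (inord ((i + 2) %% 3))
     - u ord0 (inord ((i + 2) %% 3)) * v ord0 (inord ((i + 1) %% 3))).

Definition dist3 (u v : 'rV[R]_3) : R := Num.sqrt (dot3 (u - v) (u - v)).

Definition smooth_fun (n : nat) (f : R -> 'rV[R]_n) : Prop :=
  forall (k : nat) (t : R), derivable (derive1n k f) t 1.

Definition e1 (gamma : R -> 'rV[R]_3) : R -> 'rV[R]_3 := derive1 gamma.
Definition e3 (nn : R -> 'rV[R]_3) : R -> 'rV[R]_3 := nn.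
Definition e2 (gamma nn : R -> 'rV[R]_3) : R -> 'rV[R]_3 :=
  fun t => cross3 (e3 nn t) (e1 gamma t).

(* kappa_1, kappa_2, kappa_3 : the coefficients in
   e1' = k1 e2 + k2 e3, e2' = -k1 e1 + k3 e3, e3' = -k2 e1 - k3 e2 *)
Definition kappa1 gamma nn (t : R) : R := dot3 (derive1 (e1 gamma) t) (e2 gamma nn t).
Definition kappa2 gamma nn (t : R) : R := dot3 (derive1 (e1 gamma) t) (e3 nn t).
Definition kappa3 gamma nn (t : R) : R := dot3 (derive1 (e2 gamma nn) t) (e3 nn t).

(* homogeneous coordinates of the dual-boundary [-gamma.n : n] in RP^3* *)
Definition dual_boundary_hom (gamma nn : R -> 'rV[R]_3) (t : R) : 'rV[R]_4 :=
  \row_(i < 4)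
    (if (i == ord0 :> 'I_4) then - dot3 (gamma t) (nn t)
     else nn t ord0 (inord i.-1)).

Definition dual_boundary_affine (gamma nn : R -> 'rV[R]_3) (j : 'I_4) (t : R)
  : 'rV[R]_3 :=
  \row_(c < 3) (dual_boundary_hom gamma nn t ord0 (lift j c)
                / dual_boundary_hom gamma nn t ord0 j).

Definition deriv_rank (phi : R -> 'rV[R]_3) (t1 : R) (m : nat) : nat :=
  \rank (\matrix_(k < m, c < 3) (derive1n k.+1 phi t1) ord0 c).

Definition type_index (phi : R -> 'rV[R]_3) (t1 : R) (i a : nat) : Prop :=
  deriv_rank phi t1 a = i /\ forall m, (m < a)%N -> deriv_rank phi t1 m <> i.

Definition curve_type (phi : R -> 'rV[R]_3) (t1 : R) (a1 a2 a3 : nat) : Prop :=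
  type_index phi t1 1 a1 /\ type_index phi t1 2 a2 /\ type_index phi t1 3 a3.

Definition dual_boundary_type (gamma nn : R -> 'rV[R]_3) (t1 : R) (a1 a2 a3 : nat)
  : Prop :=
  exists j : 'I_4, dual_boundary_hom gamma nn t1 ord0 j != 0 /\
    curve_type (dual_boundary_affine gamma nn j) t1 a1 a2 a3.

(* x in R^3 is the (finite) point hat-gamma^*(t1): the osculating plane of the
   dual-boundary at t1 viewed as a point of RP^3 *)
Definition dual_osc_point (gamma nn : R -> 'rV[R]_3) (t1 : R) (x : 'rV[R]_3) : Prop :=
  let g := fun t => dot3 (gamma t) (nn t) in
  [/\ dot3 x (nn t1) = g t1,
      dot3 x (derive1 nn t1) = derive1 g t1 &
      dot3 x (derive1n 2 nn t1) = derive1n 2 g t1].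

End Defs.

(* Main.v *)
Require Import Defs.
From HB Require Import structures.
From mathcomp Require Import all_boot all_order all_algebra.
From mathcomp Require Import all_classical all_reals all_analysis.
From mathcomp Require Import ring lra.
Set Implicit Arguments. Unset Strict Implicit.
Import Order.TTheory GRing.Theory Num.Theory.
Import numFieldNormedType.Exports.
Local Open Scope ring_scope.


Section Alg.
Variable R : realType.
Implicit Types u v w a n : 'rV[R]_3.
Definition i0 : 'I_3 := @Ordinal 3 0 isT.
Definition i1 : 'I_3 := @Ordinal 3 1 isT.
Definition i2 : 'I_3 := @Ordinal 3 2 isT.

Lemma dot3E u v : dot3 u v =
  u ord0 i0 * v ord0 i0 + u ord0 i1 * v ord0 i1 + u ord0 i2 * v ord0 i2.
Proof.
rewrite /dot3 !big_ord_recl big_ord0 addr0 addrA.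
by congr (_ * _ + _ * _ + _ * _); congr (_ ord0 _); apply/val_inj.
Qed.

Lemma cross3_0 u v : cross3 u v ord0 i0 = u ord0 i1 * v ord0 i2 - u ord0 i2 * v ord0 i1.
Proof. by rewrite /cross3 mxE; congr (_ * _ - _ * _); congr (_ ord0 _); apply/val_inj; rewrite /= inordK. Qed.
Lemma cross3_1 u v : cross3 u v ord0 i1 = u ord0 i2 * v ord0 i0 - u ord0 i0 * v ord0 i2.
Proof. by rewrite /cross3 mxE; congr (_ * _ - _ * _); congr (_ ord0 _); apply/val_inj; rewrite /= inordK. Qed.
Lemma cross3_2 u v : cross3 u v ord0 i2 = u ord0 i0 * v ord0 i1 - u ord0 i1 * v ord0 i0.
Proof. by rewrite /cross3 mxE; congr (_ * _ - _ * _); congr (_ ord0 _); apply/val_inj; rewrite /= inordK. Qed.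

Lemma ord3P (i : 'I_3) : i = i0 \/ i = i1 \/ i = i2.
Proof.
case: i => [[|[|[|k]]] H]; [left|right;left|right;right|by []]; by apply/val_inj.
Qed.

Lemma row3P u v : u ord0 i0 = v ord0 i0 -> u ord0 i1 = v ord0 i1 ->
  u ord0 i2 = v ord0 i2 -> u = v.
Proof.
move=> h0 h1 h2; apply/rowP => i; rewrite (ord1 ord0) in h0 h1 h2 *.
by case: (ord3P i) => [->|[->|->]].
Qed.

Lemma coordD u v i : (u + v) ord0 i = u ord0 i + v ord0 i. Proof. by rewrite mxE. Qed.
Lemma coordB u v i : (u - v) ord0 i = u ord0 i - v ord0 i. Proof. by rewrite !mxE. Qed.
Lemma coordN u i : (- u) ord0 i = - u ord0 i. Proof. by rewrite mxE. Qed.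
Lemma coordZ u k i : (k *: u) ord0 i = k * u ord0 i. Proof. by rewrite mxE. Qed.
Lemma coord0 i : (0 : 'rV[R]_3) ord0 i = 0. Proof. by rewrite mxE. Qed.

Ltac coords := rewrite ?dot3E; do 3 rewrite ?coordD ?coordB ?coordN ?coordZ ?coord0 ?cross3_0 ?cross3_1 ?cross3_2.

Lemma dot3C u v : dot3 u v = dot3 v u.
Proof. coords; ring. Qed.
Lemma dot3Dr u v w : dot3 u (v + w) = dot3 u v + dot3 u w.
Proof. coords; ring. Qed.
Lemma dot3Zr u v k : dot3 u (k *: v) = k * dot3 u v.
Proof. coords; ring. Qed.
Lemma dot3Dl u v w : dot3 (v + w) u = dot3 v u + dot3 w u.
Proof. coords; ring. Qed.
Lemma dot3Zl u v k : dot3 (k *: v) u = k * dot3 v u.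
Proof. coords; ring. Qed.
Lemma dot3Br u v w : dot3 u (v - w) = dot3 u v - dot3 u w.
Proof. coords; ring. Qed.
Lemma dot3r0 u : dot3 u 0 = 0.
Proof. coords; ring. Qed.

Lemma dec_gen v a n : v - (dot3 v a *: a + dot3 v (cross3 n a) *: cross3 n a + dot3 v n *: n)
  = (1 - dot3 n n * dot3 a a + dot3 n a ^+ 2) *: v + (dot3 v a * (dot3 n n - 1)) *: a
    - (dot3 v a * dot3 n a) *: n - (dot3 v n * dot3 n a) *: a + (dot3 v n * (dot3 a a - 1)) *: n.
Proof. apply: row3P; coords; ring. Qed.

Lemma dec v a n : dot3 a a = 1 -> dot3 n n = 1 -> dot3 n a = 0 ->
  v = dot3 v a *: a + dot3 v (cross3 n a) *: cross3 n a + dot3 v n *: n.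
Proof.
move=> ha hn hna; apply/eqP; rewrite -subr_eq0 dec_gen ha hn hna.
rewrite subrr !mulr0 expr2 mulr0 mul1r subrr add0r !scale0r.
by rewrite !(addr0, subr0).
Qed.

Lemma dot3Nl u v : dot3 (- u) v = - dot3 u v. Proof. coords; ring. Qed.
Lemma dot3Bl u v w : dot3 (v - w) u = dot3 v u - dot3 w u. Proof. coords; ring. Qed.
Lemma dot3NN u : dot3 (- u) (- u) = dot3 u u. Proof. coords; ring. Qed.

Section Main.
Variables (a b c n m p g0 x : 'rV[R]_3).
Hypothesis C1 : dot3 a a = 1.
Hypothesis C2 : dot3 a b = 0.
Hypothesis C4 : dot3 n n = 1.
Hypothesis C5 : dot3 n m = 0.
Hypothesis C7 : dot3 n a = 0.
Hypothesis C8 : dot3 m a + dot3 n b = 0.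
Hypothesis C9 : dot3 p a + 2 * dot3 m b + dot3 n c = 0.
Hypothesis hx1 : dot3 x n = dot3 g0 n.
Hypothesis hx2 : dot3 x m = dot3 a n + dot3 g0 m.
Hypothesis hx3 : dot3 x p = dot3 b n + dot3 a m + (dot3 a m + dot3 g0 p).

Let e := cross3 n a.
Let k1 := dot3 b e.
Let k2 := dot3 b n.
Let k3 := dot3 (cross3 m a + cross3 n b) n.
Let k2' := dot3 c n + dot3 b m.
Let k3' := dot3 (cross3 p a + cross3 m b + (cross3 m b + cross3 n c)) n
           + dot3 (cross3 m a + cross3 n b) m.
Let D := k2 * (k3' + k1 * k2) + k3 * (- k2' + k1 * k3).

Lemma S1 : k3 = - dot3 m e. Proof. rewrite /k3 /e; coords; ring. Qed.
Lemma S2 : k3' = - dot3 p e + dot3 b (cross3 n m). Proof. rewrite /k3' /e; coords; ring. Qed.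
Lemma ee : dot3 e e = 1.
Proof. have -> : dot3 e e = dot3 n n * dot3 a a - dot3 n a ^+ 2 by rewrite /e; coords; ring.
by rewrite C1 C4 C7 expr2 mulr0 mulr1 subr0. Qed.
Lemma en : cross3 e n = a.
Proof. have -> : cross3 e n = dot3 n n *: a - dot3 n a *: n by apply: row3P; rewrite /e; coords; ring.
by rewrite C4 C7 scale1r scale0r subr0. Qed.
Lemma ae : dot3 a e = 0. Proof. rewrite /e; coords; ring. Qed.
Lemma ne : dot3 n e = 0. Proof. rewrite /e; coords; ring. Qed.
Lemma decv v : v = dot3 v a *: a + dot3 v e *: e + dot3 v n *: n.
Proof. exact: dec. Qed.

Lemma ma : dot3 m a = - k2.
Proof. by have := C8; rewrite [dot3 n b]dot3C => /eqP; rewrite addr_eq0 => /eqP. Qed.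
Lemma me : dot3 m e = - k3. Proof. by rewrite S1 opprK. Qed.
Lemma mdec : m = (- k2) *: a + (- k3) *: e.
Proof. by rewrite {1}(decv m) ma me dot3C C5 scale0r addr0. Qed.
Lemma bdec : b = k1 *: e + k2 *: n.
Proof. by rewrite {1}(decv b) dot3C C2 scale0r add0r. Qed.

Lemma bnm : dot3 b (cross3 n m) = - k1 * k2.
Proof.
rewrite {1}bdec dot3Dl !dot3Zl.
have -> : dot3 n (cross3 n m) = 0 by coords; ring.
have -> : dot3 e (cross3 n m) = dot3 m (cross3 e n) by rewrite /e; coords; ring.
by rewrite en ma mulr0 addr0 mulrN mulNr.
Qed.
Lemma bm : dot3 b m = - k1 * k3.
Proof.
rewrite {1}bdec dot3Dl !dot3Zl C5 mulr0 addr0 dot3C me; ring.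
Qed.
Lemma pa : dot3 p a = 2 * k1 * k3 - dot3 c n.
Proof.
have := C9; rewrite [dot3 m b]dot3C bm [dot3 n c]dot3C => /eqP; rewrite -addrA addr_eq0 => /eqP ->; ring.
Qed.

Lemma alg1 : D = - k2 * dot3 p e + k3 * dot3 p a.
Proof. rewrite /D S2 bnm /k2' bm pa; ring. Qed.

Let y := x - g0.
Lemma yn : dot3 y n = 0. Proof. by rewrite /y dot3Bl hx1 subrr. Qed.
Lemma ym : dot3 y m = 0. Proof. by rewrite /y dot3Bl hx2 addrK dot3C C7. Qed.
Lemma am : dot3 a m = - k2. Proof. by rewrite dot3C ma. Qed.
Lemma yp : dot3 y p = - k2. Proof. rewrite /y dot3Bl hx3 am /k2; ring. Qed.
Lemma ydec : y = dot3 y a *: a + dot3 y e *: e.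
Proof. by rewrite {1}(decv y) yn scale0r addr0. Qed.

Lemma key1 : D * dot3 y a = - k2 * k3 /\ D * dot3 y e = k2 ^+ 2.
Proof.
have h1 : - k2 * dot3 y a - k3 * dot3 y e = 0.
  by rewrite -ym [in dot3 y m]mdec dot3Dr !dot3Zr !mulNr.
have h2 : dot3 y a * dot3 p a + dot3 y e * dot3 p e = - k2.
  by rewrite -yp [in dot3 y p]ydec [dot3 (_ *: _ + _) _]dot3Dl !dot3Zl [dot3 a p]dot3C [dot3 e p]dot3C.
rewrite alg1; split.
- have -> : (- k2 * dot3 p e + k3 * dot3 p a) * dot3 y a =
     k3 * (dot3 y a * dot3 p a + dot3 y e * dot3 p e) + dot3 p e * (- k2 * dot3 y a - k3 * dot3 y e) by ring.
  by rewrite h1 h2; ring.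
- have -> : (- k2 * dot3 p e + k3 * dot3 p a) * dot3 y e =
     - k2 * (dot3 y a * dot3 p a + dot3 y e * dot3 p e) - dot3 p a * (- k2 * dot3 y a - k3 * dot3 y e) by ring.
  by rewrite h1 h2; ring.
Qed.

Lemma yy : dot3 y y = dot3 y a ^+ 2 + dot3 y e ^+ 2.
Proof. by rewrite {1}ydec dot3Dl !dot3Zl !expr2 ![dot3 _ y]dot3C. Qed.

Lemma alg2 : D != 0 -> dist3 g0 x = `| k2 * Num.sqrt (k2 ^+ 2 + k3 ^+ 2) / D |.
Proof.
move=> D0; case: key1 => K1 K2.
have Ya : dot3 y a = - k2 * k3 / D by rewrite -K1 mulrAC divff // mul1r.
have Ye : dot3 y e = k2 ^+ 2 / D by rewrite -K2 mulrAC divff // mul1r.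
rewrite /dist3 (_ : g0 - x = - y); last by rewrite /y opprB.
rewrite dot3NN yy Ya Ye -sqrtr_sqr; congr Num.sqrt.
rewrite !exprMn sqr_sqrtr ?addr_ge0 ?sqr_ge0 //.
field; exact: D0.
Qed.

Lemma alg3 : D = 0 -> exists al be ga : R, [|| al != 0, be != 0 | ga != 0] /\
  al *: n + be *: m + ga *: p = 0.
Proof.
move=> D0; case: key1 => _; rewrite D0 mul0r => /esym /eqP; rewrite sqrf_eq0 => /eqP k20.
have [k30|k30] := eqVneq k3 0.
- exists 0, 1, 0; split; first by rewrite oner_eq0 orbT.
  by rewrite mdec k20 k30 oppr0 !scale0r !scale1r !addr0.
move: D0; rewrite alg1 k20 mulNr mul0r oppr0 add0r => /eqP; rewrite mulf_eq0 (negbTE k30) /= => /eqP pa0.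
exists (- k3 * dot3 p n), (dot3 p e), k3; split; first by rewrite k30 !orbT.
rewrite [X in k3 *: X](decv p) mdec k20 pa0 oppr0 !scale0r !add0r /e.
apply: row3P; coords; ring.
Qed.

End Main.
End Alg.


Section Calc.
Variable R : realType.
Implicit Types (f g : R -> R) (t df dg c : R).

Lemma coord_is_derive n (f : R -> 'rV[R]_n) (t : R) (i : 'I_n) :
  derivable f t 1 -> is_derive t 1 (fun s => f s ord0 i) (derive1 f t ord0 i).
Proof.
move=> df; have /derivable_mxP/(_ ord0 i) di := df.
by apply: DeriveDef => //; rewrite derive1E derive_mx // mxE.
Qed.

Lemma vec_is_derive n (f : R -> 'rV[R]_n) (t : R) (df : 'rV[R]_n) :
  (forall i, is_derive t 1 (fun s => f s ord0 i) (df ord0 i)) ->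
  derivable f t 1 /\ derive1 f t = df.
Proof.
move=> H.
have D : derivable f t 1.
  by apply/derivable_mxP => i j; rewrite (ord1 i); exact: ex_derive.
split => //; rewrite derive1E derive_mx //; apply/matrixP => i j.
by rewrite mxE (ord1 i); exact: derive_val.
Qed.

Lemma isd_mul f g t df dg : is_derive t 1 f df -> is_derive t 1 g dg ->
  is_derive t 1 (fun s => f s * g s) (df * g t + f t * dg).
Proof.
move=> Hf Hg; have [H1 H2] := is_deriveM Hf Hg.
apply: DeriveDef; first exact: H1.
by rewrite H2 /GRing.scale /=; ring.
Qed.

Lemma isd_add f g t df dg : is_derive t 1 f df -> is_derive t 1 g dg ->
  is_derive t 1 (fun s => f s + g s) (df + dg).
Proof. by move=> Hf Hg; have [H1 H2] := is_deriveD Hf Hg; apply: DeriveDef. Qed.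

Lemma isd_opp f t df : is_derive t 1 f df -> is_derive t 1 (fun s => - f s) (- df).
Proof. by move=> Hf; have [H1 H2] := is_deriveN Hf; apply: DeriveDef. Qed.

Lemma isd_sub f g t df dg : is_derive t 1 f df -> is_derive t 1 g dg ->
  is_derive t 1 (fun s => f s - g s) (df - dg).
Proof. by move=> Hf Hg; apply: isd_add => //; apply: isd_opp. Qed.

Lemma isd_inv f t df : is_derive t 1 f df -> f t != 0 ->
  is_derive t 1 (fun s => (f s)^-1) (- df / (f t * f t)).
Proof.
move=> [H1 H2] ft; apply: DeriveDef; first exact: derivableV.
rewrite deriveV // H2 /GRing.scale /= expr2 invfM; ring.
Qed.

Lemma isd_div f g t df dg : is_derive t 1 f df -> is_derive t 1 g dg -> g t != 0 ->
  is_derive t 1 (fun s => f s / g s) ((df * g t - f t * dg) / (g t * g t)).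
Proof.
move=> Hf Hg gt; have H := @isd_mul f (fun s => (g s)^-1) t _ _ Hf (isd_inv Hg gt).
apply: (is_derive_eq H).
by field.
Qed.

Lemma isd_cst0 f t df (c : R) : is_derive t 1 f df -> (forall s, f s = c) -> df = 0.
Proof.
move=> [_ <-] Hc; rewrite (_ : f = cst c); last by apply/funext.
exact: derive_cst.
Qed.

Lemma isd_ext f g t df : f = g -> is_derive t 1 f df -> is_derive t 1 g df.
Proof. by move=> ->. Qed.

End Calc.


Section Calc3.
Variable R : realType.
Implicit Types (u v : R -> 'rV[R]_3) (t : R) (du dv : 'rV[R]_3).

Ltac coords3 := rewrite ?dot3E; do 3 rewrite ?coordD ?coordB ?coordN ?coordZ ?coord0 ?cross3_0 ?cross3_1 ?cross3_2.

Definition vder t u du := forall i, is_derive t 1 (fun s => u s ord0 i) (du ord0 i).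

Lemma dot_isd u v t du dv : vder t u du -> vder t v dv ->
  is_derive t 1 (fun s => dot3 (u s) (v s)) (dot3 du (v t) + dot3 (u t) dv).
Proof.
move=> Hu Hv.
have -> : (fun s => dot3 (u s) (v s)) = (fun s => u s ord0 i0 * v s ord0 i0 +
   u s ord0 i1 * v s ord0 i1 + u s ord0 i2 * v s ord0 i2).
  by apply/funext => s; rewrite dot3E.
apply: (is_derive_eq (isd_add (isd_add (isd_mul (Hu i0) (Hv i0)) (isd_mul (Hu i1) (Hv i1))) (isd_mul (Hu i2) (Hv i2)))).
coords3; ring.
Qed.

Lemma cross_isd u v t du dv : vder t u du -> vder t v dv ->
  vder t (fun s => cross3 (u s) (v s)) (cross3 du (v t) + cross3 (u t) dv).
Proof.
move=> Hu Hv i; case: (ord3P i) => [->|[->|->]].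
- have -> : (fun s => cross3 (u s) (v s) ord0 i0) = (fun s => u s ord0 i1 * v s ord0 i2 - u s ord0 i2 * v s ord0 i1).
    by apply/funext => s; rewrite cross3_0.
  apply: (is_derive_eq (isd_sub (isd_mul (Hu i1) (Hv i2)) (isd_mul (Hu i2) (Hv i1)))).
  coords3; ring.
- have -> : (fun s => cross3 (u s) (v s) ord0 i1) = (fun s => u s ord0 i2 * v s ord0 i0 - u s ord0 i0 * v s ord0 i2).
    by apply/funext => s; rewrite cross3_1.
  apply: (is_derive_eq (isd_sub (isd_mul (Hu i2) (Hv i0)) (isd_mul (Hu i0) (Hv i2)))).
  coords3; ring.
- have -> : (fun s => cross3 (u s) (v s) ord0 i2) = (fun s => u s ord0 i0 * v s ord0 i1 - u s ord0 i1 * v s ord0 i0).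
    by apply/funext => s; rewrite cross3_2.
  apply: (is_derive_eq (isd_sub (isd_mul (Hu i0) (Hv i1)) (isd_mul (Hu i1) (Hv i0)))).
  coords3; ring.
Qed.

Lemma add_isd u v t du dv : vder t u du -> vder t v dv ->
  vder t (fun s => u s + v s) (du + dv).
Proof.
move=> Hu Hv i.
have -> : (fun s => (u s + v s) ord0 i) = (fun s => u s ord0 i + v s ord0 i).
  by apply/funext => s; rewrite coordD.
by rewrite coordD; apply: isd_add.
Qed.

Lemma smooth_vder u k t : smooth_fun u -> vder t (derive1n k u) (derive1n k.+1 u t).
Proof. move=> su i; exact: (coord_is_derive i (su k t)). Qed.

Lemma vder_derive u t du : vder t u du -> derive1 u t = du.
Proof. by move=> H; case: (vec_is_derive H). Qed.
Lemma vder_derivable u t du : vder t u du -> derivable u t 1.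
Proof. by move=> H; case: (vec_is_derive H). Qed.
End Calc3.


Lemma chart_id (R : realType) (al be ga f0 f1 f2 P0 P1 P2 : R) : f0 != 0 ->
  al*P0+be*P1+ga*P2 = 0 -> al*f0+be*f1+ga*f2 = 0 ->
  (be*f0 + 2*ga*f1) * ((P1*f0 - P0*f1)/(f0*f0)) + ga*f0 *
   (((P2*f0 + P1*f1 - (P1*f1 + P0*f2)) * (f0*f0) - (P1*f0 - P0*f1)*(f1*f0 + f0*f1)) / ((f0*f0)*(f0*f0))) = 0.
Proof.
move=> f00 hP hf.
have -> : (be*f0 + 2*ga*f1) * ((P1*f0 - P0*f1)/(f0*f0)) + ga*f0 *
   (((P2*f0 + P1*f1 - (P1*f1 + P0*f2)) * (f0*f0) - (P1*f0 - P0*f1)*(f1*f0 + f0*f1)) / ((f0*f0)*(f0*f0)))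
  = (al*P0+be*P1+ga*P2) - P0/f0*(al*f0+be*f1+ga*f2) by field.
by rewrite hP hf mulr0 subr0.
Qed.

Lemma lin_aux (R : realType) (x y w : R) : x + y + (y + w) = 0 -> x + 2 * y + w = 0.
Proof. by move=> h; rewrite -h; ring. Qed.

Lemma d1val (R : realType) (f : R -> R) (t df : R) : is_derive t 1 f df -> derive1 f t = df.
Proof. by move=> H; rewrite derive1E derive_val. Qed.

Lemma neg_aux (R : realType) (al be ga X Y Z : R) :
  al * X + be * Y + ga * Z = 0 -> al * - X + be * - Y + ga * - Z = 0.
Proof. by move=> h; rewrite !mulrN -!opprD h oppr0. Qed.

Section Glue.
Variable R : realType.
Variables (gamma nn : R -> 'rV[R]_3).
Hypotheses (sg : smooth_fun gamma) (sn : smooth_fun nn).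
Hypothesis H1 : forall t, dot3 (derive1 gamma t) (derive1 gamma t) = 1.
Hypothesis H2 : forall t, dot3 (nn t) (nn t) = 1.
Hypothesis H3 : forall t, dot3 (nn t) (derive1 gamma t) = 0.

Local Notation G k := (derive1n k gamma).
Local Notation N k := (derive1n k nn).

Lemma dG k (t : R) : vder t (G k) (G k.+1 t). Proof. exact: smooth_vder. Qed.
Lemma dN k (t : R) : vder t (N k) (N k.+1 t). Proof. exact: smooth_vder. Qed.

Lemma C2 t : dot3 (G 1 t) (G 2 t) = 0.
Proof.
have H1' : forall s, dot3 (G 1 s) (G 1 s) = 1 by exact: H1.
have := isd_cst0 (dot_isd (dG 1 t) (dG 1 t)) H1'.
rewrite [dot3 (G 2 t) _]dot3C => h.
have : 2 * dot3 (G 1 t) (G 2 t) = 0 by rewrite -h; ring.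
by move/eqP; rewrite mulf_eq0 pnatr_eq0 orFb => /eqP.
Qed.
Lemma C5 t : dot3 (N 0 t) (N 1 t) = 0.
Proof.
have H2' : forall s, dot3 (N 0 s) (N 0 s) = 1 by exact: H2.
have := isd_cst0 (dot_isd (dN 0 t) (dN 0 t)) H2'.
rewrite [dot3 (N 1 t) _]dot3C => h.
have : 2 * dot3 (N 0 t) (N 1 t) = 0 by rewrite -h; ring.
by move/eqP; rewrite mulf_eq0 pnatr_eq0 orFb => /eqP.
Qed.
Lemma C8 t : dot3 (N 1 t) (G 1 t) + dot3 (N 0 t) (G 2 t) = 0.
Proof.
have H3' : forall s, dot3 (N 0 s) (G 1 s) = 0 by exact: H3.
exact: isd_cst0 (dot_isd (dN 0 t) (dG 1 t)) H3'. Qed.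
Lemma C9 t : dot3 (N 2 t) (G 1 t) + 2 * dot3 (N 1 t) (G 2 t) + dot3 (N 0 t) (G 3 t) = 0.
Proof.
have h := isd_cst0 (isd_add (dot_isd (dN 1 t) (dG 1 t)) (dot_isd (dN 0 t) (dG 2 t))) C8.
exact: lin_aux h.
Qed.

Lemma de2 t : derive1 (e2 gamma nn) t = cross3 (N 1 t) (G 1 t) + cross3 (N 0 t) (G 2 t).
Proof.
have h := vder_derive (cross_isd (dN 0 t) (dG 1 t)).

have -> : e2 gamma nn = (fun s => cross3 (N 0 s) (G 1 s)) by [].

exact: h. Qed.

Lemma k2'E t : derive1 (kappa2 gamma nn) t = dot3 (G 3 t) (N 0 t) + dot3 (G 2 t) (N 1 t).
Proof.
have -> : kappa2 gamma nn = (fun s => dot3 (G 2 s) (N 0 s)) by [].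
exact: d1val (dot_isd (dG 2 t) (dN 0 t)). Qed.

Lemma k3'E t : derive1 (kappa3 gamma nn) t =
  dot3 (cross3 (N 2 t) (G 1 t) + cross3 (N 1 t) (G 2 t) + (cross3 (N 1 t) (G 2 t) + cross3 (N 0 t) (G 3 t))) (N 0 t)
  + dot3 (cross3 (N 1 t) (G 1 t) + cross3 (N 0 t) (G 2 t)) (N 1 t).
Proof.
have -> : kappa3 gamma nn = fun s => dot3 (cross3 (N 1 s) (G 1 s) + cross3 (N 0 s) (G 2 s)) (N 0 s).
  by apply/funext => s; rewrite /kappa3 de2.
exact: d1val (dot_isd (add_isd (cross_isd (dN 1 t) (dG 1 t)) (cross_isd (dN 0 t) (dG 2 t))) (dN 0 t)).
Qed.

Let g := fun t => dot3 (gamma t) (nn t).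
Lemma g'E : derive1 g = fun s => dot3 (G 1 s) (N 0 s) + dot3 (G 0 s) (N 1 s).
Proof. apply/funext => s; exact: d1val (dot_isd (dG 0 s) (dN 0 s)). Qed.
Lemma g''E t : derive1 (derive1 g) t = (dot3 (G 2 t) (N 0 t) + dot3 (G 1 t) (N 1 t)) + (dot3 (G 1 t) (N 1 t) + dot3 (G 0 t) (N 2 t)).
Proof.
rewrite g'E.
exact: d1val (isd_add (dot_isd (dG 1 t) (dN 0 t)) (dot_isd (dG 0 t) (dN 1 t))).
Qed.


Let Nh (s : R) (i : 'I_4) : R := dual_boundary_hom gamma nn s ord0 i.
Lemma NhE (s : R) (i : 'I_4) : Nh s i = if i == ord0 then - dot3 (gamma s) (nn s) else nn s ord0 (inord i.-1).
Proof. by rewrite /Nh mxE. Qed.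
Let dNh (i : 'I_4) : R -> R := fun s => if i == ord0 then - (dot3 (G 1 s) (N 0 s) + dot3 (G 0 s) (N 1 s))
  else N 1 s ord0 (inord i.-1).
Let ddNh (i : 'I_4) : R -> R := fun t => if i == ord0 then
  - ((dot3 (G 2 t) (N 0 t) + dot3 (G 1 t) (N 1 t)) + (dot3 (G 1 t) (N 1 t) + dot3 (G 0 t) (N 2 t)))
  else N 2 t ord0 (inord i.-1).

Lemma dNh_isd (i : 'I_4) (s : R) : is_derive s 1 (fun u => Nh u i) (dNh i s).
Proof.
have -> : (fun u => Nh u i) = (fun u => if i == ord0 then - dot3 (gamma u) (nn u) else nn u ord0 (inord i.-1)).
  by apply/funext => u; exact: NhE.
rewrite /dNh; case: (i == ord0).
- exact: isd_opp (dot_isd (dG 0 s) (dN 0 s)).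
- exact: dN 0 s (inord i.-1).
Qed.

Lemma ddNh_isd (i : 'I_4) (t : R) : is_derive t 1 (dNh i) (ddNh i t).
Proof.
rewrite /dNh /ddNh; case: (i == ord0).
- exact: isd_opp (isd_add (dot_isd (dG 1 t) (dN 0 t)) (dot_isd (dG 0 t) (dN 1 t))).
- exact: dN 1 t (inord i.-1).
Qed.

Lemma chart_contra (t1 : R) (j : 'I_4) (al be ga : R) :
  Nh t1 j != 0 ->
  deriv_rank (dual_boundary_affine gamma nn j) t1 2 = 2%N ->
  (forall i, al * Nh t1 i + be * dNh i t1 + ga * ddNh i t1 = 0) ->
  al = 0 /\ be = 0 /\ ga = 0.
Proof.
move=> hj hr hc.
set phi := dual_boundary_affine gamma nn j.
have phiE : forall s c, phi s ord0 c = Nh s (lift j c) / Nh s j by move=> s c; rewrite mxE.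
pose Q c s := (dNh (lift j c) s * Nh s j - Nh s (lift j c) * dNh j s) / (Nh s j * Nh s j).
have dphi : forall s, Nh s j != 0 -> vder s phi (\row_c Q c s).
  move=> s ns c; rewrite mxE.
  have -> : (fun u => phi u ord0 c) = (fun u => Nh u (lift j c) / Nh u j) by apply/funext => u; exact: phiE.
  exact: isd_div (dNh_isd _ s) (dNh_isd j s) ns.

have nearj : \forall s \near t1, Nh s j != 0.
  have : derivable (fun u => Nh u j) t1 1 by case: (dNh_isd j t1).
  move=> /derivable1_diffP/differentiable_continuous fc.
  exact: cvgr_neq0 fc hj.
pose f0 := Nh t1 j; pose f1 := dNh j t1; pose f2 := ddNh j t1.
pose Q2 c := ((ddNh (lift j c) t1 * f0 + dNh (lift j c) t1 * f1 - (dNh (lift j c) t1 * f1 + Nh t1 (lift j c) * f2)) * (f0 * f0)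
   - (dNh (lift j c) t1 * f0 - Nh t1 (lift j c) * f1) * (f1 * f0 + f0 * f1)) / ((f0 * f0) * (f0 * f0)).
have dQ : forall c, is_derive t1 1 (Q c) (Q2 c).
  move=> c.
  exact: isd_div (isd_sub (isd_mul (ddNh_isd (lift j c) t1) (dNh_isd j t1))
     (isd_mul (dNh_isd (lift j c) t1) (ddNh_isd j t1))) (isd_mul (dNh_isd j t1) (dNh_isd j t1)) (mulf_neq0 hj hj).

have d2 : vder t1 (derive1 phi) (\row_c Q2 c).
  move=> c; rewrite mxE; apply: (near_eq_is_derive _ (dQ c)).
  near=> s; rewrite (vder_derive (dphi s _)) ?mxE //; near: s; exact: nearj.

have e1 : derive1 phi t1 = \row_c Q c t1 := vder_derive (dphi t1 hj).
have e2 : derive1 (derive1 phi) t1 = \row_c Q2 c := vder_derive d2.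
pose A := \matrix_(k < 2, c < 3) (derive1n k.+1 phi t1) ord0 c.
pose w := \row_(k < 2) (if k == ord0 then be * f0 + 2 * ga * f1 else ga * f0).
have wA : w *m A = 0.
  apply/rowP => c; rewrite !mxE big_ord_recl big_ord_recl big_ord0 !mxE.
  rewrite eqxx (_ : (lift ord0 ord0 == ord0 :> 'I_2) = false) //.
  rewrite (_ : derive1n (nat_of_ord (ord0 : 'I_2)).+1 phi t1 = derive1 phi t1) //.
  rewrite (_ : derive1n (nat_of_ord (lift (ord0 : 'I_2) (ord0 : 'I_1))).+1 phi t1 = derive1 (derive1 phi) t1) //.
  rewrite e1 e2 !mxE addr0.
  exact: chart_id hj (hc (lift j c)) (hc j).

have rf : row_free A by rewrite /row_free; apply/eqP; exact: hr.
move/eqP: wA; rewrite (mulmx_free_eq0 _ rf) => /eqP w0.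
have w1 : w ord0 (lift ord0 ord0) = 0 by rewrite w0 mxE.
have w2 : w ord0 ord0 = 0 by rewrite w0 mxE.
rewrite !mxE /= in w1 w2.
have ga0 : ga = 0.
  by move/eqP: w1; rewrite mulf_eq0 (negbTE hj) orbF => /eqP.
have be0 : be = 0.
  by move/eqP: w2; rewrite ga0 !(mul0r, mulr0, addr0) mulf_eq0 (negbTE hj) orbF => /eqP.
have := hc j; rewrite be0 ga0 !(mul0r, addr0) => /eqP; rewrite mulf_eq0 (negbTE hj) orbF => /eqP al0.
by [].
Unshelve. all: by end_near.
Qed.

Lemma main_glue (t1 : R) (x : 'rV[R]_3) (j : 'I_4) :
  Nh t1 j != 0 -> deriv_rank (dual_boundary_affine gamma nn j) t1 2 = 2%N ->
  dual_osc_point gamma nn t1 x ->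
  let k1 := kappa1 gamma nn t1 in
  let k2 := kappa2 gamma nn t1 in
  let k3 := kappa3 gamma nn t1 in
  let k2' := derive1 (kappa2 gamma nn) t1 in
  let k3' := derive1 (kappa3 gamma nn) t1 in
  let D := k2 * (k3' + k1 * k2) + k3 * (- k2' + k1 * k3) in
  D != 0 /\
  dist3 (gamma t1) x = `| k2 * Num.sqrt (k2 ^+ 2 + k3 ^+ 2) / D |.
Proof.
move=> hj hr [hx1 hx2 hx3] k1 k2 k3 k2' k3' D.
have hx2' : dot3 x (N 1 t1) = dot3 (G 1 t1) (N 0 t1) + dot3 (G 0 t1) (N 1 t1).
  by rewrite hx2; exact: (congr1 (fun h => h t1) g'E).
have hx3' : dot3 x (N 2 t1) = (dot3 (G 2 t1) (N 0 t1) + dot3 (G 1 t1) (N 1 t1)) + (dot3 (G 1 t1) (N 1 t1) + dot3 (G 0 t1) (N 2 t1)).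
  by rewrite hx3; exact: g''E.
have ek3 : k3 = dot3 (cross3 (N 1 t1) (G 1 t1) + cross3 (N 0 t1) (G 2 t1)) (N 0 t1).
  by rewrite /k3 /kappa3 de2.

have hD : D = dot3 (G 2 t1) (N 0 t1) *
   (dot3 (cross3 (N 2 t1) (G 1 t1) + cross3 (N 1 t1) (G 2 t1) + (cross3 (N 1 t1) (G 2 t1) + cross3 (N 0 t1) (G 3 t1))) (N 0 t1)
     + dot3 (cross3 (N 1 t1) (G 1 t1) + cross3 (N 0 t1) (G 2 t1)) (N 1 t1)
    + dot3 (G 2 t1) (cross3 (N 0 t1) (G 1 t1)) * dot3 (G 2 t1) (N 0 t1)) +
  dot3 (cross3 (N 1 t1) (G 1 t1) + cross3 (N 0 t1) (G 2 t1)) (N 0 t1) *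
   (- (dot3 (G 3 t1) (N 0 t1) + dot3 (G 2 t1) (N 1 t1)) +
    dot3 (G 2 t1) (cross3 (N 0 t1) (G 1 t1)) * dot3 (cross3 (N 1 t1) (G 1 t1) + cross3 (N 0 t1) (G 2 t1)) (N 0 t1)).
  by rewrite /D /k2' /k3' k2'E k3'E ek3.

have [D0|D0] := eqVneq D 0.
  exfalso.
  have [al [be [ga [nz Hv]]]] := alg3 (H1 t1) (C2 t1) (H2 t1) (C5 t1) (H3 t1) (C8 t1) (C9 t1) hx1 hx2' hx3' (etrans (esym hD) D0).
  have hc : forall i, al * Nh t1 i + be * dNh i t1 + ga * ddNh i t1 = 0.
    move=> i; rewrite NhE /dNh /ddNh; case: (i == ord0).
    - have h := congr1 (dot3 x) Hv.
      rewrite dot3r0 !dot3Dr !dot3Zr hx1 hx2' hx3' in h.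
      exact: neg_aux h.
    - have := congr1 (fun v : 'rV[R]_3 => v ord0 (inord i.-1)) Hv.
      by rewrite /= !coordD !coordZ mxE.
  have [al0 [be0 ga0]] := chart_contra hj hr hc.
  by move: nz; rewrite al0 be0 ga0 eqxx.
split => //.
have D0' := D0; rewrite hD in D0'.
rewrite -/D hD ek3.
exact: alg2 (H1 t1) (C2 t1) (H2 t1) (C5 t1) (H3 t1) (C8 t1) (C9 t1) hx1 hx2' hx3' D0'.
Qed.

End Glue.

Unset Implicit Arguments.
Theorem proposition3p6 (R : realType) (gamma nn : R -> 'rV[R]_3) (t1 : R) (r : nat) :
  smooth_fun gamma -> smooth_fun nn ->
  (forall t, dot3 (derive1 gamma t) (derive1 gamma t) = 1) ->
  (forall t, dot3 (nn t) (nn t) = 1) ->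
  (forall t, dot3 (nn t) (derive1 gamma t) = 0) ->
  (0 < r)%N ->
  dual_boundary_type gamma nn t1 1 2 (2 + r) ->
  forall x : 'rV[R]_3, dual_osc_point gamma nn t1 x ->
  let k1 := kappa1 gamma nn t1 in
  let k2 := kappa2 gamma nn t1 in
  let k3 := kappa3 gamma nn t1 in
  let k2' := derive1 (kappa2 gamma nn) t1 in
  let k3' := derive1 (kappa3 gamma nn) t1 in
  let D := k2 * (k3' + k1 * k2) + k3 * (- k2' + k1 * k3) in
  D != 0 /\
  dist3 (gamma t1) x = `| k2 * Num.sqrt (k2 ^+ 2 + k3 ^+ 2) / D |.
Proof.
move=> sg sn H1 H2 H3 r0 [j [hj [_ [[hr _] _]]]] x hx.
apply: main_glue; [exact: sg|exact: sn|exact: H1|exact: H2|exact: H3|exact: hj|exact: hr|exact: hx].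
Qed.
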